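(* Let $G$ be a Tanner graph whose smallest left (variable-node) degree $deg_l^-$ is at least 3, whose smallest right (check-node) degree $deg_r^-$ is at least 2, and whose girth $g$ satisfies $g>4$. Then $w^{BSC}_{\min}\ge (deg_l^- -1)^{\lceil g/4\rceil-1}$ and $w^{AWGN}_{\min}\ge (deg_l^- -1)^{\lceil g/4\rceil-1}$.
   Context: A Tanner graph $G$ is a finite bipartite graph with variable nodes $v_1,\dots,v_n$ and check nodes; its code consists of all $x\in\{0,1\}^n$ with every check node having an even number of neighbours $v_i$ with $x_i=1$. A degree-$\ell$ lift replaces each node by $\ell$ copies and each edge by a perfect matching between copy-sets; a lift-realizable pseudocodeword $p\in\mathbb{Z}_{\ge0}^n$ is obtained from a codeword of the code of a finite lift by letting $p_i$ be the number of copies of $v_i$ assigned 1. For nonzero $p$, with $e$ the smallest number such that the sum of the $e$ largest $p_i$ is at least $\frac12\sum_ip_i$, $w^{BSC}(p)=2e$ if equality holds and $2e-1$ otherwise; $w^{AWGN}(p)=(\sum_ip_i)^2/\sum_ip_i^2$. $w^{BSC}_{\min}$, $w^{AWGN}_{\min}$ are the minima of these weights over all nonzero lift-realizable pseudocodewords of $G$. *)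

(* Defs.v *)
From mathcomp Require Import all_boot all_order all_algebra all_fingroup.
Set Implicit Arguments. Unset Strict Implicit. Unset Printing Implicit Defensive.
Import Order.TTheory GRing.Theory Num.Theory.

(* A Tanner graph with variable nodes 'I_n and check nodes 'I_m is given by
   its (simple, bipartite) adjacency relation H v c. *)

Section Tanner.
Variables (n m : nat) (H : 'I_n -> 'I_m -> bool).

Definition ldeg (v : 'I_n) : nat := #|[set c | H v c]|.
Definition rdeg (c : 'I_m) : nat := #|[set v | H v c]|.

Definition is_min_left_degree (dl : nat) : Prop :=
  (forall v, dl <= ldeg v) /\ (exists v, ldeg v = dl).

Definition has_cycle_of_length (L : nat) : Prop :=
  exists k (v : 'I_k -> 'I_n) (c : 'I_k -> 'I_m),
    [/\ 2 <= k, L = 2 * k, injective v, injective c &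
        forall i : 'I_k, H (v i) (c i) && H (v (ordS i)) (c i)].

Definition is_girth (g : nat) : Prop :=
  has_cycle_of_length g /\ (forall L, has_cycle_of_length L -> g <= L).

(* A degree-l lift: every edge (v,c) is replaced by the perfect matching
   (v,i) -- (c, pi v c i) between the copy sets.  x is a codeword of the
   lift if every copy (c,j) of every check node has an even number of
   neighbours (v,i) in the lift with x v i = true. *)
Definition lift_codeword (l : nat) (pi : 'I_n -> 'I_m -> {perm 'I_l})
    (x : 'I_n -> 'I_l -> bool) : Prop :=
  forall (c : 'I_m) (j : 'I_l),
    ~~ odd #|[set u : 'I_n * 'I_l | [&& H u.1 c, pi u.1 c u.2 == j & x u.1 u.2]]|.

Definition lift_realizable (p : 'I_n -> nat) : Prop :=
  exists (l : nat) (pi : 'I_n -> 'I_m -> {perm 'I_l}) (x : 'I_n -> 'I_l -> bool),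
    lift_codeword pi x /\ forall v, p v = #|[set i | x v i]|.

End Tanner.

Section Weights.
Variables (n : nat) (p : 'I_n -> nat).

Definition ptotal : nat := \sum_i p i.

Definition topsum (e : nat) : nat :=
  \max_(S : {set 'I_n} | #|S| == e) \sum_(i in S) p i.

Definition bsc_e : nat := find (fun e => ptotal <= 2 * topsum e) (iota 0 n.+1).

Definition wBSC : nat :=
  if 2 * topsum bsc_e == ptotal then 2 * bsc_e else (2 * bsc_e).-1.

Definition wAWGN : rat :=
  ((ptotal%:R) ^+ 2 / (\sum_i (p i ^ 2)%N %:R))%R.

End Weights.

(* Main.v *)
Require Import Defs.
From mathcomp Require Import all_boot all_order all_algebra all_fingroup.
From mathcomp Require Import zify.
Set Implicit Arguments. Unset Strict Implicit. Unset Printing Implicit Defensive.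

Section Graph.
Variables (n m : nat) (H : 'I_n -> 'I_m -> bool).

Definition adj (x y : 'I_n + 'I_m) : bool :=
  match x, y with
  | inl v, inr c => H v c
  | inr c, inl v => H v c
  | _, _ => false
  end.

Definition isl (x : 'I_n + 'I_m) : bool := if x is inl _ then true else false.

Definition getv (dv : 'I_n) (x : 'I_n + 'I_m) := if x is inl v then v else dv.
Definition getc (dc : 'I_m) (x : 'I_n + 'I_m) := if x is inr c then c else dc.

Lemma adjH dv dc x y : adj x y -> isl x -> H (getv dv x) (getc dc y).
Proof. by case: x => a; case: y. Qed.
Lemma adjH' dv dc x y : adj x y -> isl y -> H (getv dv y) (getc dc x).
Proof. by case: x => a; case: y. Qed.
Lemma getv_inj dv x y : isl x -> isl y -> getv dv x = getv dv y -> x = y.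
Proof. by case: x => a; case: y => b //= _ _ ->. Qed.
Lemma getc_inj dc x y : ~~ isl x -> ~~ isl y -> getc dc x = getc dc y -> x = y.
Proof. by case: x => a; case: y => b //= _ _ ->. Qed.

Lemma adj_isl x y : adj x y -> isl y = ~~ isl x.
Proof. by case: x => a; case: y. Qed.

Section Walk.
Variables (f : nat -> 'I_n + 'I_m) (L : nat).
Hypothesis fadj : forall i, i < L -> adj (f i) (f i.+1).

Lemma isl_walk a j : a + j <= L -> isl (f (a + j)) = isl (f a) (+) odd j.
Proof.
elim: j => [|j IH] hj; first by rewrite addn0 addbF.
rewrite addnS (adj_isl (fadj _)); last by lia.
by rewrite IH ?oddS; [case: (isl _); case: (odd j)|lia].
Qed.
End Walk.

End Graph.

Section G.
Variables (n m : nat) (H : 'I_n -> 'I_m -> bool).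

Lemma no_closed (g : nat) (dv : 'I_n) (dc : 'I_m) (f : nat -> 'I_n + 'I_m) L :
  is_girth H g -> (forall i, i < L -> adj H (f i) (f i.+1)) ->
  (forall i, i.+2 <= L -> f i != f i.+2) -> 0 < L -> f 0 = f L -> L < g -> False.
Proof.
move=> [_ gmin] fadj fnb L0 fL Lg.
pose P d := (0 < d) && [exists a : 'I_L.+1, (a + d <= L) && (f a == f (a + d))].
have exP : exists d, P d.
  exists L; rewrite /P L0 /=; apply/existsP; exists ord0 => /=.
  by rewrite add0n leqnn fL eqxx.
case: (ex_minnP exP) => d /andP[d0 /existsP[a0 /andP[ad0 /eqP fa0]]] dmin.
have [a ad fa] : exists2 a : nat, a + d <= L & f a = f (a + d) by exists a0.
clear a0 ad0 fa0.
have dist : forall b e, 0 < e -> e < d -> b + e <= L -> f b != f (b + e).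
  move=> b e e0 ed be; apply/negP => /eqP fe.
  have be' : b < L.+1 by lia.
  have : P e.
    rewrite /P e0 /=; apply/existsP; exists (Ordinal be') => /=.
    by rewrite be fe eqxx.
  move/dmin; lia.
have oddd : odd d = false.
  have := isl_walk fadj ad; rewrite -fa.
  by case: (isl _); case: (odd d).
have d2 : d != 2.
  apply/eqP => d2; move: fa; rewrite d2 addn2 => fa.
  by move: (fnb a); rewrite fa eqxx; move/(_ (ltac:(lia))).
have d1 : d != 1 by apply/eqP => d1; rewrite d1 in oddd.
set k := d./2.
have dk : d = 2 * k.
  by have := odd_double_half d; rewrite oddd add0n -muln2 mulnC.
have k2 : 2 <= k by lia.
pose s := nat_of_bool (~~ isl (f a)).
have s1 : s <= 1 by rewrite /s; case: (isl _).
have fv : forall j, j < k -> isl (f (a + s + 2 * j)).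
  move=> j jk.
  have := isl_walk fadj (a := a) (j := s + 2 * j) (ltac:(lia)).
  rewrite !oddD /= addnA /s; case: (odd j);
  by case: (isl (f a)).
have fc : forall j, j < k -> ~~ isl (f (a + s + 2 * j + 1)).
  move=> j jk.
  have := isl_walk fadj (a := a) (j := s + 2 * j + 1) (ltac:(lia)).
  rewrite !oddD /= !addnA /s; case: (odd j);
  by case: (isl (f a)) => ->.
have cyc : has_cycle_of_length H d.
  exists k, (fun j : 'I_k => getv dv (f (a + s + 2 * j))),
    (fun j : 'I_k => getc dc (f (a + s + 2 * j + 1))).
  split => //.
  - move=> j j' /= e; apply/val_inj => /=.
    have hj1 := ltn_ord j; have hj2 := ltn_ord j'.
    have {e} e' := getv_inj (fv _ hj1) (fv _ hj2) e.
    case: (ltngtP j j') => // hj; exfalso.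
    + have := dist (a + s + 2 * j) (2 * (j' - j)) (ltac:(lia)) (ltac:(lia)) (ltac:(lia)).
      by rewrite (_ : a + s + 2 * j + 2 * (j' - j) = a + s + 2 * j') ?e' ?eqxx //; lia.
    + have := dist (a + s + 2 * j') (2 * (j - j')) (ltac:(lia)) (ltac:(lia)) (ltac:(lia)).
      by rewrite (_ : a + s + 2 * j' + 2 * (j - j') = a + s + 2 * j) ?e' ?eqxx //; lia.
  - move=> j j' /= e; apply/val_inj => /=.
    have hj1 := ltn_ord j; have hj2 := ltn_ord j'.
    have {e} e' := getc_inj (fc _ hj1) (fc _ hj2) e.
    case: (ltngtP j j') => // hj; exfalso.
    + have := dist (a + s + 2 * j + 1) (2 * (j' - j)) (ltac:(lia)) (ltac:(lia)) (ltac:(lia)).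
      by rewrite (_ : a + s + 2 * j + 1 + 2 * (j' - j) = a + s + 2 * j' + 1) ?e' ?eqxx //; lia.
    + have := dist (a + s + 2 * j' + 1) (2 * (j - j')) (ltac:(lia)) (ltac:(lia)) (ltac:(lia)).
      by rewrite (_ : a + s + 2 * j' + 1 + 2 * (j - j') = a + s + 2 * j + 1) ?e' ?eqxx //; lia.
  - move=> j; have hj := ltn_ord j; apply/andP; split.
    + apply: adjH; last exact: fv.
      have := fadj (a + s + 2 * j) (ltac:(lia)).
      by rewrite (_ : (a + s + 2 * j).+1 = a + s + 2 * j + 1) //; lia.
    + rewrite /ordS /=.
      case: (ltnP j.+1 k) => hjk.
      * rewrite modn_small //.
        apply: adjH'; last exact: fv.
        have := fadj (a + s + 2 * j + 1) (ltac:(lia)).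
        by rewrite (_ : (a + s + 2 * j + 1).+1 = a + s + 2 * j.+1) //; lia.
      * have ej : j.+1 = k by lia.
        rewrite ej modnn muln0 addn0.
        have fa0 := fv 0 (ltac:(lia)); rewrite muln0 addn0 in fa0.
        move: fa0; rewrite /s; case ea: (isl (f a)) => /= fa0.
        - apply: adjH'; last by rewrite addn0.
          have := fadj (a + 0 + 2 * j + 1) (ltac:(lia)).
          by rewrite (_ : (a + 0 + 2 * j + 1).+1 = a + d) -?fa ?addn0 //; lia.
        - rewrite (_ : a + 1 + 2 * j + 1 = a + d); last by lia.
          rewrite -fa; apply: adjH' => //.
          by have := fadj a (ltac:(lia)); rewrite addn1.
have := gmin _ cyc; lia.
Qed.
End G.

Section G.
Variables (n m : nat) (H : 'I_n -> 'I_m -> bool).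

Lemma adj_sym x y : adj H x y = adj H y x.
Proof. by case: x => a; case: y. Qed.

Lemma no_two (g : nat) (dv : 'I_n) (dc : 'I_m) (f1 f2 : nat -> 'I_n + 'I_m) L j :
  is_girth H g ->
  (forall i, i < L -> adj H (f1 i) (f1 i.+1)) ->
  (forall i, i < L -> adj H (f2 i) (f2 i.+1)) ->
  (forall i, i.+2 <= L -> f1 i != f1 i.+2) ->
  (forall i, i.+2 <= L -> f2 i != f2 i.+2) ->
  f1 0 = f2 0 -> f1 L = f2 L -> j <= L -> f1 j != f2 j -> 2 * L < g -> False.
Proof.
move=> gi a1 a2 n1 n2 e0 eL jL nj Lg.
have exA : exists x, (x <= j) && (f1 x == f2 x) by exists 0; rewrite e0 eqxx.
case: (@ex_maxnP _ j exA) => [x /andP[] //|a /andP[aj /eqP ea] amax].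
have exB : exists x, [&& j <= x, x <= L & f1 x == f2 x] by exists L; rewrite jL leqnn eL eqxx.
case: (ex_minnP exB) => b /and3P[jb bL /eqP eb] bmin.
have aj' : a < j by rewrite ltn_neqAle aj andbT; apply/eqP => aj0; move: nj; rewrite -aj0 ea eqxx.
have jb' : j < b by rewrite ltn_neqAle jb andbT; apply/eqP => bj0; move: nj; rewrite bj0 eb eqxx.
have mid : forall i, a < i -> i < b -> f1 i != f2 i.
  move=> i ai ib; apply/negP => /eqP ei.
  case: (leqP i j) => ij.
  - have : (i <= j) && (f1 i == f2 i) by rewrite ij ei eqxx.
    move/amax; lia.
  - have : [&& j <= i, i <= L & f1 i == f2 i] by rewrite ei eqxx andbT; apply/andP; split; lia.
    move/bmin; lia.
pose h i := if i <= b - a then f1 (a + i) else f2 (b - (i - (b - a))).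
have hadj : forall i, i < 2 * (b - a) -> adj H (h i) (h i.+1).
  move=> i hi; rewrite /h.
  have : (i.+1 < b - a) \/ (b - a < i) \/ (i.+1 = b - a) \/ (i = b - a) by lia.
  case=> [c1|[c1|[c1|c1]]].
  + have -> : (i <= b - a) = true by lia.
    have -> : (i.+1 <= b - a) = true by lia.
    rewrite addnS; apply: a1; lia.
  + have -> : (i <= b - a) = false by lia.
    have -> : (i.+1 <= b - a) = false by lia.
    have -> : b - (i - (b - a)) = (b - (i.+1 - (b - a))).+1 by lia.
    rewrite adj_sym; apply: a2; lia.
  + have -> : (i <= b - a) = true by lia.
    have -> : (i.+1 <= b - a) = true by lia.
    have -> : a + i.+1 = b by lia.
    have -> : a + i = b.-1 by lia.
    have := a1 b.-1; rewrite prednK; last by lia.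
    apply; lia.
  + have -> : (i <= b - a) = true by lia.
    have -> : (i.+1 <= b - a) = false by lia.
    have -> : a + i = b by lia.
    have -> : b - (i.+1 - (b - a)) = b.-1 by lia.
    rewrite eb adj_sym; have := a2 b.-1; rewrite prednK; last by lia.
    apply; lia.
have hnb : forall i, i.+2 <= 2 * (b - a) -> h i != h i.+2.
  move=> i hi; rewrite /h.
  have : (i.+2 <= b - a) \/ (b - a < i) \/ (b - a = i) \/ (i.+1 = b - a) by lia.
  case=> [c1|[c1|[c1|c1]]].
  + have -> : (i <= b - a) = true by lia.
    have -> : (i.+2 <= b - a) = true by lia.
    rewrite !addnS; apply: n1; lia.
  + have -> : (i <= b - a) = false by lia.
    have -> : (i.+2 <= b - a) = false by lia.
    have -> : b - (i - (b - a)) = (b - (i.+2 - (b - a))).+2 by lia.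
    rewrite eq_sym; apply: n2; lia.
  + have -> : (i <= b - a) = true by lia.
    have -> : (i.+2 <= b - a) = false by lia.
    have -> : a + i = b by lia.
    have -> : b - (i.+2 - (b - a)) = b - 2 by lia.
    rewrite eb eq_sym; have := n2 (b - 2); rewrite (_ : (b - 2).+2 = b); last by lia.
    apply; lia.
  + have -> : (i <= b - a) = true by lia.
    have -> : (i.+2 <= b - a) = false by lia.
    have -> : a + i = b.-1 by lia.
    have -> : b - (i.+2 - (b - a)) = b.-1 by lia.
    apply: mid; lia.
apply: (@no_closed n m H g dv dc h (2 * (b - a))) => //.
- lia.
- rewrite /h leq0n addn0.
  have -> : (2 * (b - a) <= b - a) = false by lia.
  by have -> : b - (2 * (b - a) - (b - a)) = a by lia.
- lia.
Qed.
End G.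

Lemma uniq_flatten_map (A B : eqType) (f : A -> seq B) (key : B -> A) (l : seq A) :
  uniq l -> (forall a, a \in l -> uniq (f a)) ->
  (forall a b, a \in l -> b \in f a -> key b = a) -> uniq (flatten (map f l)).
Proof.
elim: l => [|a l IH] //= /andP[al ul] uf kf.
rewrite cat_uniq uf ?mem_head // IH //; last first.
- by move=> a' b h; apply: kf; rewrite inE h orbT.
- by move=> a' h; apply: uf; rewrite inE h orbT.
rewrite andbT; apply/hasPn => b /flattenP[s /mapP[a' a'l ->] bs]; apply/negP => bfa.
have e1 := kf _ _ (mem_head a l) bfa.
have e2 : key b = a' by apply: kf => //; rewrite inE a'l orbT.
by move: al; rewrite -e1 e2 a'l.
Qed.

Section Walks.
Variables (n m : nat) (H : 'I_n -> 'I_m -> bool).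

Fixpoint walks (k : nat) (u : 'I_n) (cp : 'I_m) : seq (seq ('I_n + 'I_m)) :=
  match k with
  | 0 => [:: [::]]
  | k'.+1 => flatten [seq flatten [seq [seq inr c :: inl w :: s | s <- walks k' w c]
                         | w <- enum [pred w | H w c && (w != u)]]
                    | c <- enum [pred c | H u c && (c != cp)]]
  end.

Lemma walks_prop k u cp s : s \in walks k u cp ->
  [/\ size s = 2 * k,
      (forall i, i < 2 * k -> adj H (nth (inl u) (inl u :: s) i) (nth (inl u) (inl u :: s) i.+1)),
      (forall i, i.+2 <= 2 * k -> nth (inl u) (inl u :: s) i != nth (inl u) (inl u :: s) i.+2) &
      (0 < k -> nth (inl u) (inl u :: s) 1 != inr cp)].
Proof.
elim: k u cp s => [|k IH] u cp s /=.
  by rewrite inE => /eqP ->; split => // i; rewrite ltn0.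
move=> /flattenP[ss /mapP[c]]; rewrite mem_enum inE => /andP[huc ccp] ->.
move=> /flattenP[ss' /mapP[w]]; rewrite mem_enum inE => /andP[hwc wu] ->.
move=> /mapP[s' hs' ->].
have [sz ad nb c1] := IH _ _ _ hs'.
have nthE : forall i, i <= 2 * k ->
    nth (inl u) [:: inl u, inr c, inl w & s'] i.+2 = nth (inl w) (inl w :: s') i.
  by move=> i hi /=; apply: set_nth_default => /=; rewrite sz; lia.
split.
- by rewrite /= sz; lia.
- case=> [|[|i]] hi /=; first exact: huc.
  + exact: hwc.
  + have := ad i (ltac:(lia)).
    by rewrite -!nthE //; lia.
- case=> [|[|i]] hi.
  + by rewrite /=; apply: contra wu => /eqP [->].
  + rewrite /=; move: (c1 (ltac:(lia))).
    by case: (s') sz => [|x s''] /= sz; [lia| rewrite eq_sym].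
  + have e1 := nthE i (ltac:(lia)); have e2 := nthE i.+2 (ltac:(lia)).
    have e2' : nth (inl u) [:: inr c, inl w & s'] i.+3 = nth (inl w) (inl w :: s') i.+2 := e2.
    by rewrite e1 e2'; apply: nb; lia.
- by move=> _ /=.
Qed.

Lemma walks_uniq k u cp : uniq (walks k u cp).
Proof.
elim: k u cp => [|k IH] u cp //=.
apply: (@uniq_flatten_map _ _ _ (fun s => if s is inr c :: _ then c else cp)).
- exact: enum_uniq.
- move=> c _; apply: (@uniq_flatten_map _ _ _ (fun s => if s is _ :: inl w :: _ then w else u)).
  + exact: enum_uniq.
  + by move=> w _; rewrite map_inj_uniq // => s1 s2 [].
  + by move=> w s _ /mapP[s' _ ->].
- by move=> c s _ /flattenP[ss /mapP[w _ ->] /mapP[s' _ ->]].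
Qed.

Lemma nth_size_last (T : Type) (x : T) (s : seq T) : nth x (x :: s) (size s) = last x s.
Proof. by elim: s x => //= y s IH x; rewrite (set_nth_default y) ?IH. Qed.

Lemma walks_last_inj g (dv : 'I_n) (dc : 'I_m) k u cp : is_girth H g -> 4 * k < g ->
  {in walks k u cp &, injective (last (inl u))}.
Proof.
move=> gi kg s1 s2 h1 h2 el.
have [sz1 ad1 nb1 _] := walks_prop h1.
have [sz2 ad2 nb2 _] := walks_prop h2.
case: (boolP [exists i : 'I_(size s1), nth (inl u) s1 i != nth (inl u) s2 i]) => [/existsP[i hi]|/existsPn hn].
- exfalso.
  apply: (@no_two n m H g dv dc (fun i => nth (inl u) (inl u :: s1) i) (fun i => nth (inl u) (inl u :: s2) i) (2 * k) i.+1 gi ad1 ad2 nb1 nb2) => //.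
  + by rewrite -{1}sz1 nth_size_last el -sz2 nth_size_last.
  + by rewrite -sz1 ltn_ord.
  + lia.
- apply: (@eq_from_nth _ (inl u)); first by rewrite sz1 sz2.
  by move=> i hi; have := hn (Ordinal hi); rewrite negbK => /eqP.
Qed.

Lemma walks_last_ne g (dv : 'I_n) (dc : 'I_m) k u cp s : is_girth H g -> 0 < k -> 2 * k < g ->
  s \in walks k u cp -> last (inl u) s != inl u.
Proof.
move=> gi k0 kg hs; apply/negP => /eqP e.
have [sz ad nb _] := walks_prop hs.
apply: (@no_closed n m H g dv dc (fun i => nth (inl u) (inl u :: s) i) (2 * k) gi ad nb) => //=.
- lia.
- by rewrite -sz nth_size_last e.
Qed.

Section Lower.
Variables (p : 'I_n -> nat) (dl : nat).
Hypothesis LI : forall u c, H u c -> p u <= \sum_(w | H w c && (w != u)) p w.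
Hypothesis deg : forall u, dl <= ldeg H u.

Definition pN (x : 'I_n + 'I_m) := if x is inl v then p v else 0.

Lemma W_lower k u cp : dl.-1 ^ k * p u <= \sum_(s <- walks k u cp) pN (last (inl u) s).
Proof.
elim: k u cp => [|k IH] u cp /=.
  by rewrite big_cons big_nil /= expn0 mul1n addn0.
rewrite big_flatten /= big_map.
have inner : forall c, c \in [pred c | H u c && (c != cp)] -> dl.-1 ^ k * p u <=
    \sum_(s <- flatten [seq [seq inr c :: inl w :: s | s <- walks k w c]
                     | w <- enum [pred w | H w c && (w != u)]]) pN (last (inl u) s).
  move=> c; rewrite inE => /andP[huc _].
  rewrite big_flatten /= big_map.
  apply: (@leq_trans (\sum_(w <- enum [pred w | H w c && (w != u)]) dl.-1 ^ k * p w)).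
    rewrite -big_distrr /= leq_mul2l big_enum /=.
    by apply/orP; right; apply: leq_trans (LI huc) _; apply: eq_leq; apply: eq_bigl => w; rewrite inE.
  apply: leq_sum => w _; rewrite big_map /=; exact: IH.
apply: (@leq_trans (\sum_(c <- enum [pred c | H u c && (c != cp)]) dl.-1 ^ k * p u)); last first.
  by rewrite !big_enum /=; apply: leq_sum => c hc; apply: inner.
rewrite big_enum /= sum_nat_const expnS -mulnA leq_mul2r; apply/orP; right.
have := deg u; rewrite /ldeg (cardD1 cp).
suff -> : #|[predD1 [set c | H u c] & cp]| = #|[pred c | H u c && (c != cp)]|.
  have hb : (cp \in [set c | H u c]) <= 1 by case: (_ \in _).
  move: hb; move: (nat_of_bool _) => b; move: #|_| => x; lia.
by apply: eq_card => c; rewrite !inE andbC.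
Qed.
End Lower.
End Walks.

Lemma sum_eq1 (T : finType) (a : T) : \sum_(j : T) ((a == j) : nat) = 1.
Proof.
rewrite (bigD1 a) //= eqxx big1 ?addn0 // => j hj.
by rewrite eq_sym (negbTE hj).
Qed.

Lemma card_sum (T : finType) (P : pred T) : #|[set z | P z]| = \sum_z (P z : nat).
Proof.
rewrite -sum1_card big_mkcond /=; apply: eq_bigr => z _.
by rewrite inE; case: (P z).
Qed.

Lemma LI_lift n m (H : 'I_n -> 'I_m -> bool) l (pi : 'I_n -> 'I_m -> {perm 'I_l})
  (x : 'I_n -> 'I_l -> bool) (p : 'I_n -> nat) :
  lift_codeword H pi x -> (forall v, p v = #|[set i | x v i]|) ->
  forall u c, H u c -> p u <= \sum_(w | H w c && (w != u)) p w.
Proof.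
move=> lc pE u c huc.
pose e w i j := (H w c && x w i) * (pi w c i == j).
have cardE j : #|[set u' : 'I_n * 'I_l | [&& H u'.1 c, pi u'.1 c u'.2 == j & x u'.1 u'.2]]|
    = \sum_w \sum_i e w i j.
  rewrite card_sum pair_big /=; apply: eq_bigr => z _.
  by rewrite /e; case: (H _ _); case: (x _ _); case: (_ == _).
have sumj w i : \sum_j e w i j = (H w c && x w i).
  by rewrite /e -big_distrr /= sum_eq1 muln1.
pose A j := \sum_i e u i j.
pose B j := \sum_(w | w != u) \sum_i e w i j.
have AB j : A j <= B j.
  have ev := lc c j; rewrite cardE (bigD1 u) //= -/(A j) -/(B j) in ev.
  have A1 : A j <= 1.
    apply: (@leq_trans (\sum_i ((((pi u c)^-1)%g j == i) : nat))); last by rewrite sum_eq1.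
    apply: leq_sum => i _; rewrite /e.
    case: eqP => [<-|_]; first by rewrite permK eqxx; case: (_ && _).
    by rewrite muln0.
  move: ev A1; rewrite oddD; case: (A j) => [|[|k]] //= ev _.
  by case: (B j) ev.
have sA : \sum_j A j = p u.
  rewrite /A exchange_big /=; under eq_bigr do rewrite sumj.
  by rewrite huc pE card_sum.
have sB : \sum_j B j = \sum_(w | H w c && (w != u)) p w.
  rewrite /B exchange_big /=; under eq_bigr do rewrite exchange_big /=.
  under eq_bigr do under eq_bigr do rewrite sumj.
  rewrite [RHS]big_mkcondl /=; apply: eq_bigr => w _.
  rewrite pE card_sum; case: (H w c) => /=; last by rewrite big1.
  by [].
by rewrite -sA -sB; apply: leq_sum => j _; apply: AB.
Qed.

Import GRing.Theory Num.Theory.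
Lemma weights_from_bound n (p : 'I_n -> nat) (v0 : 'I_n) (B : nat) :
  (forall i, p i <= p v0) -> 0 < p v0 -> p v0 * (1 + B) <= ptotal p ->
  (B <= wBSC p)%N /\ ((B%:R : rat) <= wAWGN p)%R.
Proof.
move=> Mmax M0 hT.
set M := p v0 in Mmax M0 hT *.
set T := ptotal p in hT *.
split.
- have hasP : has (fun e => T <= 2 * topsum p e) (iota 0 n.+1).
    apply/hasP; exists n; first by rewrite mem_iota; lia.
    have : T <= topsum p n.
      rewrite /topsum /T /ptotal.
      apply: leq_trans (@leq_bigmax_cond _ (fun S : {set 'I_n} => #|S| == n) (fun S => \sum_(i in S) p i) setT _).
        by apply: eq_leq; apply: eq_bigl => i; rewrite inE.
      by rewrite cardsT card_ord.
    rewrite /=; lia.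
  have eP := nth_find 0 hasP.
  have fs := hasP; rewrite has_find size_iota in fs.
  rewrite nth_iota // add0n in eP.
  have tb : topsum p (bsc_e p) <= bsc_e p * M.
    apply/bigmax_leqP => S /eqP hS.
    apply: leq_trans (_ : \sum_(i in S) M <= _); first by apply: leq_sum => i _; apply: Mmax.
    by rewrite sum_nat_const hS.
  have : (1 + B) * M <= (2 * bsc_e p) * M.
    rewrite mulnC; apply: leq_trans hT _; apply: leq_trans eP _.
    rewrite -mulnA leq_mul2l; apply/orP; right; exact: tb.
  rewrite leq_pmul2r // => h.
  rewrite /wBSC; case: ifP => _; lia.
- set S2 := \sum_i p i ^ 2.
  have S2M : S2 <= M * T.
    rewrite /S2 /T /ptotal big_distrr /=; apply: leq_sum => i _.
    by rewrite expnS expn1 leq_mul2r Mmax orbT.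
  have hi0 : exists i, 0 < p i by exists v0.
  have S20 : 0 < S2.
    rewrite /S2 (bigD1 v0) //=.
    have : 0 < p v0 ^ 2 by rewrite expn_gt0 M0.
    lia.
  have key : B * S2 <= T ^ 2.
    apply: leq_trans (_ : B * (M * T) <= _); first by rewrite leq_mul2l S2M orbT.
    rewrite mulnA expnS expn1 leq_mul2r; apply/orP; right.
    by move: hT; rewrite mulnC mulnDl mul1n; lia.
  rewrite /wAWGN -/T.
  have -> : (\sum_i ((p i ^ 2)%:R : rat))%R = (S2%:R)%R by rewrite natr_sum.
  rewrite ler_pdivlMr ?ltr0n // -natrX -natrM ler_nat.
  exact: key.
Qed.

Import GRing.Theory Num.Theory.

Theorem corollary1 (n m : nat) (H : 'I_n -> 'I_m -> bool) (dl g : nat) :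
  is_min_left_degree H dl -> 3 <= dl ->
  (forall c : 'I_m, 2 <= rdeg H c) ->
  is_girth H g -> 4 < g ->
  forall p : 'I_n -> nat, lift_realizable H p -> (exists i, p i != 0) ->
    (dl.-1 ^ ((g + 3) %/ 4).-1 <= wBSC p)%N /\
    ((dl.-1 ^ ((g + 3) %/ 4).-1)%:R <= wAWGN p :> rat)%R.
Proof.
move=> [degmin _] dl3 _ gi g4 p [l [pi [x [lc pE]]]] [i0 pi0].
have LI := LI_lift lc pE.
set t := ((g + 3) %/ 4).-1.
have t1 : 0 < t by rewrite /t; lia.
have t4 : 4 * t < g.
  rewrite /t; lia.
pose v0 := [arg max_(i > i0) p i].
have Mmax : forall i, p i <= p v0.
  by rewrite /v0; case: arg_maxnP => // j _ h i; apply: h.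
have M0 : 0 < p v0 by have := Mmax i0; lia.
have [cp] : exists cp : 'I_m, True.
  case: gi => [[k [v [c [k2 _ _ _ _]]]] _].
  by exists (c (Ordinal (ltn_trans (isT : 0 < 1) k2))).
move=> _.
apply: (weights_from_bound Mmax M0).
have low := W_lower LI degmin t v0 cp.
have ur : uniq (inl v0 :: map (last (inl v0)) (walks H t v0 cp)).
  have inj : {in walks H t v0 cp &, injective (last (inl v0))} := walks_last_inj v0 cp gi t4.
  rewrite /= (map_inj_in_uniq inj) walks_uniq andbT.
  apply/mapP => [[s hs /eqP e]].
  by move: e; rewrite eq_sym; apply/negP; apply: (walks_last_ne v0 cp gi t1 _ hs); lia.
have up : \sum_(x <- inl v0 :: map (last (inl v0)) (walks H t v0 cp)) pN p x <= ptotal p.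
  rewrite big_uniq //.
  apply: (@leq_trans (\sum_(z : 'I_n + 'I_m) pN p z)).
    by rewrite [X in _ <= X](bigID (mem (inl v0 :: map (last (inl v0)) (walks H t v0 cp)))) /= leq_addr.
  rewrite big_sumType /= [X in _ + X]big1 ?addn0 //.
move: up; rewrite big_cons big_map /=.
move: low; set W := \sum_(_ <- _) _.
move=> low up.
rewrite mulnDr muln1 mulnC; lia.
Qed.
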